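(* Let $\mathfrak{g}$ be a finite-dimensional Lie algebra over a field $K$ of characteristic zero admitting a nondegenerate inner CPA-structure. Then $\mathfrak{g}$ is metabelian, i.e. $[[\mathfrak{g},\mathfrak{g}],[\mathfrak{g},\mathfrak{g}]]=0$.
   Context: A CPA-structure on $\mathfrak{g}$ is a bilinear product $x\cdot y$ satisfying, for all $x,y,z$: $x\cdot y=y\cdot x$; $[x,y]\cdot z=x\cdot(y\cdot z)-y\cdot(x\cdot z)$; $x\cdot[y,z]=[x\cdot y,z]+[y,x\cdot z]$. It is inner if $x\cdot y=[\phi(x),y]$ for some Lie algebra homomorphism $\phi:\mathfrak{g}\to\mathfrak{g}$, and nondegenerate if $\{x\mid x\cdot y=0\ \forall y\}=0$. *)

(* Defs.v *)
From HB Require Import structures.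
From mathcomp Require Import all_boot all_order all_algebra.
Set Implicit Arguments. Unset Strict Implicit. Unset Printing Implicit Defensive.
Import GRing.Theory.
Local Open Scope ring_scope.

Definition bilinear_op (K : fieldType) (V : vectType K) (m : V -> V -> V) : Prop :=
  (forall (a : K) (x y z : V), m (a *: x + y) z = a *: m x z + m y z) /\
  (forall (a : K) (x y z : V), m x (a *: y + z) = a *: m x y + m x z).

Definition is_lie_bracket (K : fieldType) (V : vectType K) (br : V -> V -> V) : Prop :=
  [/\ bilinear_op br,
      (forall x : V, br x x = 0) &
      (forall x y z : V, br x (br y z) + br y (br z x) + br z (br x y) = 0)].

Definition lie_hom (K : fieldType) (V : vectType K) (br : V -> V -> V) (phi : V -> V) : Prop :=
  (forall (a : K) (x y : V), phi (a *: x + y) = a *: phi x + phi y) /\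
  (forall x y : V, phi (br x y) = br (phi x) (phi y)).

Definition is_CPA (K : fieldType) (V : vectType K) (br dot : V -> V -> V) : Prop :=
  [/\ bilinear_op dot,
      (forall x y : V, dot x y = dot y x),
      (forall x y z : V, dot (br x y) z = dot x (dot y z) - dot y (dot x z)) &
      (forall x y z : V, dot x (br y z) = br (dot x y) z + br y (dot x z))].

Definition inner_CPA (K : fieldType) (V : vectType K) (br dot : V -> V -> V) : Prop :=
  exists phi : V -> V, lie_hom br phi /\ forall x y : V, dot x y = br (phi x) y.

Definition nondegenerate_CPA (K : fieldType) (V : vectType K) (dot : V -> V -> V) : Prop :=
  forall x : V, (forall y : V, dot x y = 0) -> x = 0.

(* [[g,g],[g,g]] = 0, i.e. all brackets of brackets vanish
   (equivalent by bilinearity, since [g,g] is spanned by brackets) *)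
Definition metabelian (K : fieldType) (V : vectType K) (br : V -> V -> V) : Prop :=
  forall a b c d : V, br (br a b) (br c d) = 0.

(* Main.v *)
Require Import Defs.
From HB Require Import structures.
From mathcomp Require Import all_boot all_order all_algebra.
Import GRing.Theory.
Local Open Scope ring_scope.
Set Implicit Arguments.

Lemma inj_surj (K : fieldType) (V : vectType K) (f : V -> V) :
  (forall a x y, f (a *: x + y) = a *: f x + f y) -> injective f ->
  forall u, exists y, f y = u.
Proof.
move=> lf inj u.
pose g : {linear V -> V} := HB.pack f (GRing.isLinear.Build K V V *:%R f lf).
pose F := linfun g.
have k0 : lker F == 0%VS.
  by apply/lker0P => x y; rewrite !lfunE /=; apply: inj.
exists (F^-1%VF u); have := lker0_lfunVK k0 u; by rewrite lfunE.
Qed.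

Section Aux.
Variables (K : fieldType) (V : vectType K) (f : V -> V).
Hypothesis lf : forall a x y, f (a *: x + y) = a *: f x + f y.

Lemma lin0 : f 0 = 0.
Proof.
have := lf 1 0 0; rewrite !scale1r addr0 => H.
by apply: (@addrI _ (f 0)); rewrite addr0 -H.
Qed.

Lemma linD x y : f (x + y) = f x + f y.
Proof. by have := lf 1 x y; rewrite !scale1r. Qed.

Lemma linN x : f (- x) = - f x.
Proof.
apply/eqP; rewrite -subr_eq0 opprK -linD addNr.
by rewrite lin0.
Qed.

Lemma linB x y : f (x - y) = f x - f y.
Proof. by rewrite linD linN. Qed.
End Aux.

Theorem corollary2p15 (K : fieldType) (V : vectType K) (br : V -> V -> V) :
  [pchar K] =i pred0 ->
  is_lie_bracket br ->
  (exists dot : V -> V -> V,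
      [/\ is_CPA br dot, inner_CPA br dot & nondegenerate_CPA dot]) ->
  metabelian br.
Proof.
move=> ch [[bl br_lin] alt jac] [dot [[_ comm _ _] [P [[Plin Phom] dotE]] nd]].
have brl x : forall a y z, br (a *: y + z) x = a *: br y x + br z x
  by move=> a y z; exact: bl.
have brr x : forall a y z, br x (a *: y + z) = a *: br x y + br x z
  by move=> a y z; exact: br_lin.
have brDl x y z : br (y + z) x = br y x + br z x by exact: (@linD _ _ (fun t => br t x) (brl x) _ _).
have brNl x y : br (- y) x = - br y x by exact: (@linN _ _ (fun t => br t x) (brl x) _).
have brBl x y z : br (y - z) x = br y x - br z x by exact: (@linB _ _ (fun t => br t x) (brl x) _ _).
have brDr x y z : br x (y + z) = br x y + br x z by exact: (@linD _ _ (fun t => br x t) (brr x) _ _).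
have brNr x y : br x (- y) = - br x y by exact: (@linN _ _ (fun t => br x t) (brr x) _).
have brBr x y z : br x (y - z) = br x y - br x z by exact: (@linB _ _ (fun t => br x t) (brr x) _ _).
have br0l x : br 0 x = 0 by exact: (@lin0 _ _ (fun t => br t x) (brl x)).
have PN x : P (- x) = - P x by exact: (@linN _ _ P Plin x).
have PB x y : P (x - y) = P x - P y by exact: (@linB _ _ P Plin x y).
have anti x y : br x y = - br y x.
  have := alt (x + y); rewrite brDl !brDr !alt add0r addr0 => /eqP.
  by rewrite addr_eq0 => /eqP.
have Jc a b t : br (br a b) t = br a (br b t) - br b (br a t).
  have := jac a b t; rewrite (anti t (br a b)) (anti t a) brNr.
  by move=> /eqP; rewrite subr_eq0 => /eqP.
have C x y : br (P x) y = - br x (P y).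
  by rewrite -dotE comm dotE anti.
have S1 x y : P (br x y) = - br x (P (P y)) by rewrite Phom C.
have Pinj : injective P.
  move=> x y Hxy; apply/eqP; rewrite -subr_eq0; apply/eqP; apply: nd => z.
  by rewrite dotE PB Hxy subrr br0l.
have Psurj := @inj_surj _ _ P Plin Pinj.
have S2' a b y : br (br a b) (P (P y)) = br (br a b) (P (P (P (P y)))).
  have e1 : P (br (br a b) y) = - br (br a b) (P (P y)) by rewrite S1.
  have e2 c : P (P (br c y)) = br c (P (P (P (P y)))) by rewrite S1 PN S1 opprK.
  have e3 : P (br (br a b) y) = - br (br a b) (P (P (P (P y)))).
    rewrite Jc PB (S1 a) e2 (S1 b) e2 Jc -!brNr.
    by rewrite !brNr !opprK opprD opprK.
  by apply: oppr_inj; rewrite -e1 e3.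
have S2 a b u : br (br a b) (P (P u)) = br (br a b) u.
  case: (Psurj u) => v <-; case: (Psurj v) => y <-.
  by rewrite (S2' a b y).
have S5 a b x z : br (br a b) (P (br x z)) = - br (br a b) (br x z).
  have h1 := S2 x (br a b) z.
  rewrite !(Jc x (br a b)) (S2 a b z) in h1.
  move/addrI/oppr_inj in h1.
  by rewrite S1 brNr h1.
move=> a b c d.
have h1 := S5 a b c d.
have h2 := S5 c d a b.
have e : br (br a b) (br c d) = - br (br a b) (br c d).
  have := C (br a b) (br c d); rewrite h1 opprK anti h2 opprK => E.
  by rewrite -{1}E anti.
have e2 : (2%:R : K) *: br (br a b) (br c d) = 0.
  by rewrite scaler_nat mulr2n {1}e addNr.
move/eqP: e2; rewrite scaler_eq0 => /orP [|/eqP //].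
by rewrite (proj1 (pcharf0P K) ch 2).
Qed.
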